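(* Let $\mathcal{V}_t$ be a variety of $\Omega$-algebras satisfying $t(x,y)=x$ for some $t\in T_2$, let $X$ be a set, let $B=X\mathcal{V}_t^{\,p}$ be the free $\mathcal{V}_t^{\,p}$-algebra over $X$, and let $\delta$ be any congruence of $B$. Then $B/\delta$ is a semilattice sum of $\mathcal{V}_t$-algebras, i.e. $B/\delta\in\mathcal{V}_t\circ\mathcal{S}$. Moreover, if $\varrho_B$ is the semilattice replica congruence of $B$ and $\psi=\delta\vee\varrho_B$, then $\psi/\delta$ is the semilattice replica congruence of $B/\delta$, and each $\psi/\delta$-class lies in $\mathcal{V}_t$.
   Context: Standing conventions: $\Omega$-algebras are of a plural similarity type (no nullary operation symbols, at least one operation symbol of arity $\ge2$). $T_n$ is the set of $\Omega$-terms in $x_1,\dots,x_n$ in which all $n$ variables occur. An identity is regular if the same variables occur on both sides. $\mathcal{S}$ is the variety of $\Omega$-algebras satisfying all regular identities ($\Omega$-semilattices). $\mathcal{V}\circ\mathcal{S}$ is the class of $\Omega$-algebras $A$ having a congruence $\theta$ with $A/\theta\in\mathcal{S}$ and every $\theta$-class (a subalgebra) in $\mathcal{V}$ (a semilattice sum of $\mathcal{V}$-algebras). The semilattice replica congruence of an algebra $A$ is the smallest congruence $\varrho$ of $A$ with $A/\varrho\in\mathcal{S}$. Prolongation: for an identity $\sigma$ of the form $u(y_1,\dots,y_n)=v(y_1,\dots,y_n)$ and $m\ge1$, $\sigma^p_m$ is the set of identities $u(r_1,\dots,r_n)=v(r_1,\dots,r_n)$ obtained by substituting $r_i(x_1,\dots,x_m)$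 for $y_i$, with $r_i$ ranging over $T_m$; $\sigma^p=\bigcup_m\sigma^p_m$; $\Sigma^p=\bigcup_{\sigma\in\Sigma}\sigma^p$. For a variety $\mathcal{V}$, $\mathcal{V}^p$ is the variety defined by $\mathrm{Id}(\mathcal{V})^p$, $\mathrm{Id}(\mathcal{V})$ being all identities true in $\mathcal{V}$. *)

(* Defs.v *)
From mathcomp Require Import all_boot.
From Stdlib Require Import IndefiniteDescription.
Set Implicit Arguments. Unset Strict Implicit. Unset Printing Implicit Defensive.

Record signature := Signature { op_sym : Type; arity : op_sym -> nat }.

Definition plural (sg : signature) : Prop :=
  (forall o : op_sym sg, 0 < arity o) /\ (exists o : op_sym sg, 1 < arity o).

Inductive term (sg : signature) (V : Type) : Type :=
| Var : V -> term sg V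
| App : forall o : op_sym sg, ('I_(arity o) -> term sg V) -> term sg V.
Arguments Var {sg V}.
Arguments App {sg V}.

Record algebra (sg : signature) := Algebra {
  carrier :> Type;
  interp : forall o : op_sym sg, ('I_(arity o) -> carrier) -> carrier }.
Arguments interp {sg} A o args : rename.

Fixpoint eval (sg : signature) (A : algebra sg) (V : Type) (env : V -> A)
  (t : term sg V) : A :=
  match t with
  | Var v => env v
  | App o f => interp A o (fun i => eval env (f i))
  end.

Fixpoint subst (sg : signature) (V W : Type) (r : V -> term sg W)
  (t : term sg V) : term sg W :=
  match t with
  | Var v => r v
  | App o f => App o (fun i => subst r (f i))
  end.

Fixpoint occurs (sg : signature) (i : nat) (t : term sg nat) : Prop :=
  match t with
  | Var j => j = i
  | App o f => exists k, occurs i (f k)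
  end.

Definition in_T (sg : signature) (m : nat) (t : term sg nat) : Prop :=
  (forall i, occurs i t -> i < m) /\ (forall i, i < m -> occurs i t).

Definition ident (sg : signature) := (term sg nat * term sg nat)%type.

Definition sat (sg : signature) (A : algebra sg) (s : ident sg) : Prop :=
  forall env : nat -> A, eval env s.1 = eval env s.2.

Definition regular (sg : signature) (s : ident sg) : Prop :=
  forall i, occurs i s.1 <-> occurs i s.2.

Definition in_var (sg : signature) (Sig : ident sg -> Prop) (A : algebra sg) : Prop :=
  forall s, Sig s -> sat A s.

Definition IdV (sg : signature) (Sig : ident sg -> Prop) : ident sg -> Prop :=
  fun s => forall A : algebra sg, in_var Sig A -> sat A s.

Definition in_S (sg : signature) (A : algebra sg) : Prop :=
  forall s : ident sg, regular s -> sat A s.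

Definition prolong (sg : signature) (Sig : ident sg -> Prop) : ident sg -> Prop :=
  fun tau => exists (s : ident sg) (m : nat) (r : nat -> term sg nat),
    [/\ Sig s, 0 < m,
        (forall i, occurs i s.1 \/ occurs i s.2 -> in_T m (r i)) &
        tau = (subst r s.1, subst r s.2)].

Definition is_hom (sg : signature) (A B : algebra sg) (h : A -> B) : Prop :=
  forall o args, h (interp A o args) = interp B o (fun i => h (args i)).

Definition is_free (sg : signature) (P : algebra sg -> Prop) (X : Type)
  (B : algebra sg) (iota : X -> B) : Prop :=
  P B /\
  forall (A : algebra sg), P A -> forall f : X -> A,
    exists h : B -> A, [/\ is_hom h, (forall x, h (iota x) = f x) &
      forall h' : B -> A, is_hom h' -> (forall x, h' (iota x) = f x) ->
        forall b, h' b = h b].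
Arguments is_free {sg} P {X} B iota.

Definition is_cong (sg : signature) (A : algebra sg) (th : A -> A -> Prop) : Prop :=
  [/\ (forall x, th x x), (forall x y, th x y -> th y x),
      (forall x y z, th x y -> th y z -> th x z) &
      forall o (f g : 'I_(arity o) -> A), (forall i, th (f i) (g i)) ->
        th (interp A o f) (interp A o g)].
Arguments is_cong {sg} A th.

Definition cong_join (sg : signature) (A : algebra sg) (t1 t2 : A -> A -> Prop) :
  A -> A -> Prop :=
  fun x y => forall phi : A -> A -> Prop, is_cong A phi ->
    (forall a b, t1 a b -> phi a b) -> (forall a b, t2 a b -> phi a b) -> phi x y.

Arguments cong_join {sg} A t1 t2.

Definition qcarrier (A : Type) (th : A -> A -> Prop) : Type :=
  {P : A -> Prop | exists a, P = th a}.

Definition qclass (A : Type) (th : A -> A -> Prop) (a : A) : qcarrier th :=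
  exist _ (th a) (ex_intro _ a erefl).

Definition qrepr (A : Type) (th : A -> A -> Prop) (c : qcarrier th) : A :=
  proj1_sig (constructive_indefinite_description _ (proj2_sig c)).

Definition quot (sg : signature) (A : algebra sg) (th : A -> A -> Prop) : algebra sg :=
  @Algebra sg (qcarrier th)
    (fun o args => qclass th (interp A o (fun i => qrepr (args i)))).
Arguments quot {sg} A th.

Definition cong_quot (sg : signature) (A : algebra sg) (de ps : A -> A -> Prop) :
  quot A de -> quot A de -> Prop :=
  fun c d => exists a b : A, [/\ c = qclass de a, d = qclass de b & ps a b].

Arguments cong_quot {sg} A de ps.

Definition is_sl_replica (sg : signature) (A : algebra sg) (rho : A -> A -> Prop) : Prop :=
  [/\ is_cong A rho, in_S (quot A rho) &
      forall phi, is_cong A phi -> in_S (quot A phi) -> forall x y, rho x y -> phi x y].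
Arguments is_sl_replica {sg} A rho.

Definition closed (sg : signature) (A : algebra sg) (P : A -> Prop) : Prop :=
  forall o (args : 'I_(arity o) -> A), (forall i, P (args i)) -> P (interp A o args).
Arguments closed {sg} A P.

Definition subalg (sg : signature) (A : algebra sg) (P : A -> Prop)
  (HP : closed A P) : algebra sg :=
  @Algebra sg {x : A | P x}
    (fun o args => exist _ (interp A o (fun i => proj1_sig (args i)))
                          (HP o _ (fun i => proj2_sig (args i)))).

Definition classes_in (sg : signature) (Sig : ident sg -> Prop) (A : algebra sg)
  (th : A -> A -> Prop) : Prop :=
  forall a : A, exists HP : closed A (th a), in_var Sig (subalg HP).
Arguments classes_in {sg} Sig A th.

Definition in_VS (sg : signature) (Sig : ident sg -> Prop) (A : algebra sg) : Prop :=
  exists th, [/\ is_cong A th, in_S (quot A th) & classes_in Sig A th].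

(* Main.v *)
Require Import Defs.
From mathcomp Require Import all_boot zify.
From Stdlib Require Import FunctionalExtensionality PropExtensionality ProofIrrelevance.
Set Implicit Arguments. Unset Strict Implicit. Unset Printing Implicit Defensive.

Lemma eval_subst sg (A : algebra sg) V W (e : W -> A) (r : V -> term sg W) (u : term sg V) :
  eval e (subst r u) = eval (fun i => eval e (r i)) u.
Proof.
elim: u => [v|o f IH] //=. congr (interp A o). apply: functional_extensionality => i. exact: IH.
Qed.

Lemma eval_ext sg (A : algebra sg) (e1 e2 : nat -> A) u :
  (forall i, occurs i u -> e1 i = e2 i) -> eval e1 u = eval e2 u.
Proof.
elim: u => [v|o f IH] /= H; first exact: H.
congr (interp A o); apply: functional_extensionality => i; apply: IH => j Hj; apply: H; by exists i.
Qed.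

Lemma occurs_subst sg (r : nat -> term sg nat) u j :
  occurs j (subst r u) <-> exists i, occurs i u /\ occurs j (r i).
Proof.
elim: u => [v|o f IH] /=.
- split; [move=> H; by exists v | by case=> i [-> ]].
- split.
  + case=> k /IH [i [Hi Hj]]. exists i; split=> //; by exists k.
  + case=> i [[k Hk] Hj]. exists k; apply/IH; by exists i.
Qed.

Definition env2 (T : Type) (x y : T) : nat -> T := fun i => if i == 0 then x else y.
Definition tsub sg (t p q : term sg nat) := subst (env2 p q) t.
Definition tA sg (A : algebra sg) (t : term sg nat) (x y : A) := eval (env2 x y) t.

Lemma eval_tsub sg (A : algebra sg) t p q (e : nat -> A) :
  eval e (tsub t p q) = tA t (eval e p) (eval e q).
Proof.
rewrite /tsub eval_subst /tA; apply: eval_ext => i _; rewrite /env2; by case: (i == 0).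
Qed.

Lemma occurs_tsub sg (t : term sg nat) (Ht : in_T 2 t) p q j :
  occurs j (tsub t p q) <-> occurs j p \/ occurs j q.
Proof.
rewrite /tsub occurs_subst; case: Ht => H1 H2; split.
- case=> i [Hi Hj]; move: (H1 _ Hi) Hj; rewrite /env2; case: eqP => _ ?; by [left|right].
- case=> H; [exists 0 | exists 1]; split => //; by [apply: H2|].
Qed.

Fixpoint vars sg (u : term sg nat) : seq nat :=
  match u with Var j => [:: j] | App o f => flatten [seq vars (f k) | k <- enum 'I_(arity o)] end.

Lemma vars_occ sg (u : term sg nat) i : occurs i u <-> i \in vars u.
Proof.
elim: u => [j|o f IH] /=.
- rewrite inE; split; [by move->| by move/eqP->].
- split.
  + case=> k /IH Hk; apply/flattenP; exists (vars (f k)) => //; apply/mapP; exists k => //; by rewrite mem_enum.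
  + case/flattenP => s /mapP [k _ ->] /IH Hi; by exists k.
Qed.

Lemma occurs_ex sg (Hpl : plural sg) (u : term sg nat) : exists i, occurs i u.
Proof.
elim: u => [j|o f IH] /=; first by exists j.
have k : 'I_(arity o) by exists 0; case: Hpl => H _; exact: H.
case: (IH k) => i Hi; exists i; by exists k.
Qed.

Lemma in_T_var0 sg : in_T 1 (@Var sg nat 0).
Proof. split => i /=; lia. Qed.

Lemma qcarrier_eq T (th : T -> T -> Prop) (c d : qcarrier th) : proj1_sig c = proj1_sig d -> c = d.
Proof. case: c d => [P p] [Q q] /= E; subst; f_equal; apply: proof_irrelevance. Qed.

Lemma qclass_eq T (th : T -> T -> Prop) a b :
  (forall x y, th x y -> th y x) -> (forall x y z, th x y -> th y z -> th x z) ->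
  th a b -> qclass th a = qclass th b.
Proof.
move=> Hs Ht Hab; apply: qcarrier_eq => /=.
apply: functional_extensionality => x; apply: propositional_extensionality; split => H.
- exact: Ht (Hs _ _ Hab) H.
- exact: Ht Hab H.
Qed.

Lemma qclass_inv T (th : T -> T -> Prop) a b :
  (forall x, th x x) -> qclass th a = qclass th b -> th a b.
Proof. move=> Hr /(f_equal (@proj1_sig _ _)) /= ->; exact: Hr. Qed.

Lemma qclass_qrepr T (th : T -> T -> Prop) (c : qcarrier th) : qclass th (qrepr c) = c.
Proof.
apply: qcarrier_eq; case: c => P p /=; rewrite /qrepr /=.
case: (IndefiniteDescription.constructive_indefinite_description _ _) => x Hx /=; by rewrite Hx.
Qed.

Lemma qrepr_qclass T (th : T -> T -> Prop) a : (forall x, th x x) -> th (qrepr (qclass th a)) a.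
Proof.
move=> Hr; have := qclass_qrepr (qclass th a); move/(f_equal (@proj1_sig _ _)) => /= ->; exact: Hr.
Qed.

Lemma eval_cong sg (A : algebra sg) th (Hc : is_cong A th) (e1 e2 : nat -> A) u :
  (forall i, th (e1 i) (e2 i)) -> th (eval e1 u) (eval e2 u).
Proof.
case: Hc => _ _ _ Hop H; elim: u => [v|o f IH] /=; first exact: H.
apply: Hop => i; exact: IH.
Qed.

Lemma quot_eval sg (A : algebra sg) th (Hc : is_cong A th) (c : nat -> quot A th) u :
  eval c u = qclass th (eval (fun i => qrepr (c i)) u).
Proof.
have Hc' := Hc; case: Hc' => Hr Hs Ht Hop.
elim: u => [v|o f IH] /=; first by rewrite qclass_qrepr.
apply: qclass_eq => //; apply: Hop => i; rewrite IH; exact: qrepr_qclass.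
Qed.

Lemma quot_sat sg (A : algebra sg) th (Hc : is_cong A th) s : sat A s -> sat (quot A th) s.
Proof. move=> H c; by rewrite !quot_eval // H. Qed.

Lemma qclass_hom sg (A : algebra sg) th (Hc : is_cong A th) o f :
  qclass th (interp A o f) = interp (quot A th) o (fun i => qclass th (f i)).
Proof.
have Hc' := Hc; case: Hc' => Hr Hs Ht Hop.
apply: qclass_eq => //; apply: Hop => i; apply: Hs; exact: qrepr_qclass.
Qed.

Lemma tA_quot sg (A : algebra sg) th (Hc : is_cong A th) t a b :
  @tA _ (quot A th) t (qclass th a) (qclass th b) = qclass th (tA t a b).
Proof.
have Hc' := Hc; case: Hc' => Hr Hs Ht Hop.
rewrite /tA quot_eval //; apply: qclass_eq => //; apply: eval_cong => // i.
rewrite /env2; case: (i == 0); exact: qrepr_qclass.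
Qed.

Definition Hyp sg (Sig : ident sg -> Prop) (t : term sg nat) (A : algebra sg) :=
  [/\ plural sg, in_T 2 t, (forall B : algebra sg, in_var Sig B -> sat B (t, Var 0))
    & in_var (prolong (IdV Sig)) A].

Definition sim sg (A : algebra sg) t (x y : A) := tA t x y = x /\ tA t y x = y.

Lemma Pr sg Sig t (A : algebra sg) (H : Hyp Sig t A) m P R (e : nat -> A) :
  0 < m -> in_T m P -> in_T m R -> tA t (eval e P) (eval e R) = eval e P.
Proof.
case: H => Hpl Ht HVt HA Hm HP HR.
have Hpr : prolong (IdV Sig) (tsub t P R, P).
  exists (t, Var 0), m, (env2 P R); split => //.
  move=> i /= [Hi|Hi]; last by rewrite -Hi.
  case: Ht => H1 _; move: (H1 _ Hi); rewrite /env2; by case: (i == 0).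
have := HA _ Hpr e; by rewrite /= eval_tsub.
Qed.

Lemma sim_refl sg Sig t (A : algebra sg) (H : Hyp Sig t A) (x : A) : sim t x x.
Proof.
have E : tA t x x = x by have := Pr H (fun _ => x) (ltnSn 0) (@in_T_var0 sg) (@in_T_var0 sg).
by split.
Qed.

Lemma sim_sym sg (A : algebra sg) t (x y : A) : sim t x y -> sim t y x.
Proof. by case. Qed.

Lemma sim_trans sg Sig t (A : algebra sg) (H : Hyp Sig t A) (a b c : A) :
  sim t a b -> sim t b c -> sim t a c.
Proof.
have Ht : in_T 2 t by case: H.
move=> [Hab Hba] [Hbc Hcb].
pose e := fun j => if j == 0 then a else if j == 1 then b else c.
pose P := tsub t (Var 0) (tsub t (Var 1) (Var 2)).
pose R := tsub t (Var 2) (tsub t (Var 1) (Var 0)).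
have HP : in_T 3 P by split => j; rewrite /P !(occurs_tsub Ht) //= ; lia.
have HR : in_T 3 R by split => j; rewrite /R !(occurs_tsub Ht) //= ; lia.
have := Pr H e (isT : 0 < 3) HP HR; have := Pr H e (isT : 0 < 3) HR HP.
rewrite /P /R !eval_tsub /= Hbc Hab Hba Hcb => E1 E2; by split.
Qed.

Lemma sim_compat sg Sig t (A : algebra sg) (H : Hyp Sig t A) o (f g : 'I_(arity o) -> A) :
  (forall i, sim t (f i) (g i)) -> sim t (interp A o f) (interp A o g).
Proof.
have Ht : in_T 2 t by case: H.
have Hn : 0 < arity o by case: H => [[Ha _] _ _ _]; exact: Ha.
move=> Hfg.
pose k0 : 'I_(arity o) := Ordinal Hn.
pose oo (j : nat) : 'I_(arity o) := insubd k0 j.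
have ooK (k : 'I_(arity o)) : oo k = k by apply: val_inj; rewrite /oo insubdK //; exact: ltn_ord.
pose e := fun j => if j %% 2 == 1 then g (oo (j %/ 2)) else f (oo (j %/ 2)).
have eE (k : 'I_(arity o)) : e (2 * k) = f k.
  by rewrite /e (_ : (2 * k) %% 2 == 1 = false); [rewrite (_ : 2 * k %/ 2 = k) ?ooK //; lia | apply/eqP; lia].
have eO (k : 'I_(arity o)) : e (2 * k + 1) = g k.
  by rewrite /e (_ : (2 * k + 1) %% 2 == 1 = true); [rewrite (_ : (2 * k + 1) %/ 2 = k) ?ooK //; lia | apply/eqP; lia].
pose P := App o (fun k => tsub t (Var (2 * k)) (Var (2 * k + 1))).
pose R := App o (fun k => tsub t (Var (2 * k + 1)) (Var (2 * k))).
have key : forall j, (exists k : 'I_(arity o), occurs j (tsub t (Var (2 * k)) (Var (2 * k + 1))))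
   <-> (exists k : 'I_(arity o), occurs j (tsub t (Var (2 * k + 1)) (Var (2 * k)))).
  move=> j; split; case=> k; rewrite !(occurs_tsub Ht) /= => Hk; exists k; rewrite !(occurs_tsub Ht) /=; lia.
have HP : in_T (2 * arity o) P.
  split => j /=.
  - case=> k; rewrite (occurs_tsub Ht) /=; have := ltn_ord k; lia.
  - move=> Hj; have Hk : j %/ 2 < arity o by lia.
    exists (Ordinal Hk); rewrite (occurs_tsub Ht) /=; lia.
have HR : in_T (2 * arity o) R by case: HP => H1 H2; split => j /= Hj; [apply: H1; apply/key | apply/key; apply: H2].
have Hm : 0 < 2 * arity o by lia.
have EP : eval e P = interp A o f.
  rewrite /=; congr (interp A o); apply: functional_extensionality => k.
  by rewrite eval_tsub /= eE eO (proj1 (Hfg k)).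
have ER : eval e R = interp A o g.
  rewrite /=; congr (interp A o); apply: functional_extensionality => k.
  by rewrite eval_tsub /= eE eO (proj2 (Hfg k)).
have := Pr H e Hm HP HR; have := Pr H e Hm HR HP; rewrite EP ER; by split.
Qed.

Lemma sim_regular sg Sig t (A : algebra sg) (H : Hyp Sig t A) (u v : term sg nat) (e : nat -> A) :
  (forall i, occurs i u <-> occurs i v) -> sim t (eval e u) (eval e v).
Proof.
have Hpl : plural sg by case: H.
move=> Huv.
pose l := undup (vars u).
pose m := size l.
pose ren := fun i => @Var sg nat (index i l).
pose e' := fun j => e (nth 0 l j).
have Hin : forall i, occurs i u <-> i \in l by move=> i; rewrite mem_undup -vars_occ.
have HT : forall w, (forall i, occurs i w <-> occurs i u) -> in_T m (subst ren w).
  move=> w Hw; split => j.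
  - rewrite occurs_subst /= => [[i [/Hw /Hin Hi <-]]]; by rewrite index_mem.
  - move=> Hj; apply/occurs_subst; exists (nth 0 l j); split; last by rewrite /= index_uniq // undup_uniq.
    apply/Hw/Hin; exact: mem_nth.
have HEv : forall w, (forall i, occurs i w <-> occurs i u) -> eval e' (subst ren w) = eval e w.
  move=> w Hw; rewrite eval_subst /=; apply: eval_ext => i /Hw /Hin Hi; by rewrite /e' nth_index.
have Hm : 0 < m by case: (occurs_ex Hpl u) => i /Hin; rewrite -index_mem /m; lia.
have Hu := HT u (fun i => iff_refl _). have Hv := HT v (fun i => iff_sym (Huv i)).
have Eu := HEv u (fun i => iff_refl _). have Ev := HEv v (fun i => iff_sym (Huv i)).
have := Pr H e' Hm Hu Hv; have := Pr H e' Hm Hv Hu; rewrite Eu Ev => E1 E2; by split.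
Qed.

Lemma sim_idem sg Sig t (A : algebra sg) (H : Hyp Sig t A) o (a : A) :
  sim t (interp A o (fun _ => a)) a.
Proof.
have Hn : 0 < arity o by case: H => [[Ha _] _ _ _]; exact: Ha.
pose P := App o (fun _ => @Var sg nat 0).
have HP : in_T 1 P by split => j /=; [case=> _ <- // | move=> Hj; exists (Ordinal Hn); lia].
have := Pr H (fun _ => a) (ltnSn 0) HP (@in_T_var0 sg);
have := Pr H (fun _ => a) (ltnSn 0) (@in_T_var0 sg) HP => /= E1 E2; by split.
Qed.

Lemma sim_cong sg Sig t (A : algebra sg) (H : Hyp Sig t A) : is_cong A (sim t).
Proof.
split; [exact: sim_refl H | exact: sim_sym | exact: sim_trans H | exact: sim_compat H].
Qed.

Lemma sim_S sg Sig t (A : algebra sg) (H : Hyp Sig t A) : in_S (quot A (sim t)).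
Proof.
move=> s Hs c; rewrite !quot_eval; try exact: sim_cong H.
apply: qclass_eq; [exact: sim_sym | exact: sim_trans H | ].
exact: (@sim_regular _ _ _ _ H s.1 s.2 _ Hs).
Qed.

Definition bnd (s : seq nat) := foldr (fun x m => maxn x.+1 m) 0 s.
Lemma bndP s i : i \in s -> i < bnd s.
Proof. elim: s => //= x s IH; rewrite inE => /orP [/eqP -> | /IH]; lia. Qed.

Fixpoint Qt sg (t : term sg nat) k : term sg nat :=
  match k with 0 => Var 0 | k'.+1 => tsub t (Var k'.+1) (Qt t k') end.

Lemma occurs_Q sg (t : term sg nat) (Ht : in_T 2 t) k j : occurs j (Qt t k) <-> j <= k.
Proof.
elim: k => [|k IH] /=; first lia.
rewrite (occurs_tsub Ht) IH /=; lia.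
Qed.

Lemma K sg Sig t (A : algebra sg) (H : Hyp Sig t A) (u v : term sg nat) (e : nat -> A) :
  IdV Sig (u, v) -> (forall i j, tA t (e i) (e j) = e i) -> eval e u = eval e v.
Proof.
have Ht : in_T 2 t by case: H.
have HA : in_var (prolong (IdV Sig)) A by case: H.
move=> Huv He.
have EQ : forall k, eval e (Qt t k) = e k.
  elim => [|k IH] //=; by rewrite eval_tsub IH /= He.
pose N := bnd (vars u ++ vars v).
pose r := fun i => tsub t (Var i) (Qt t N).
have Hpr : prolong (IdV Sig) (subst r u, subst r v).
  exists (u, v), N.+1, r; split => //= i Hi.
  have HiN : i < N.
    apply: bndP; rewrite mem_cat; case: Hi => /vars_occ ->; by rewrite ?orbT.
  split => j; rewrite (occurs_tsub Ht) (occurs_Q Ht) /=; lia.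
have := HA _ Hpr e; rewrite /= !eval_subst.
have Er : forall i, eval e (r i) = e i by move=> i; rewrite /r eval_tsub /= EQ He.
by rewrite (@eval_ext _ _ _ e u (fun i _ => Er i)) (@eval_ext _ _ _ e v (fun i _ => Er i)).
Qed.

Lemma subalg_eval sg (A : algebra sg) (P : A -> Prop) (HP : Defs.closed A P) (env : nat -> subalg HP) u :
  proj1_sig (eval env u) = eval (fun i => proj1_sig (env i)) u.
Proof.
elim: u => [v|o f IH] //=; congr (interp A o); apply: functional_extensionality => i; exact: IH.
Qed.

Lemma sig_eq T (P : T -> Prop) (x y : {z | P z}) : proj1_sig x = proj1_sig y -> x = y.
Proof. case: x y => [x p] [y q] /= E; subst; f_equal; apply: proof_irrelevance. Qed.

Lemma sim_classes sg Sig t (A : algebra sg) (H : Hyp Sig t A) : classes_in Sig A (sim t).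
Proof.
move=> a.
have HP : Defs.closed A (sim t a).
  move=> o args Hargs.
  apply: (sim_trans H (sim_sym (sim_idem H o a))).
  apply: (sim_compat H) => i; exact: Hargs.
exists HP => s Hs env; apply: sig_eq; rewrite !subalg_eval.
case: s Hs => u v Hs; apply: (K H) => /=.
- move=> B HB; exact: HB _ Hs.
- move=> i j; exact: (proj1 (sim_trans H (sim_sym (proj2_sig (env i))) (proj2_sig (env j)))).
Qed.

Lemma comm_S sg t (Ht : in_T 2 t) (A : algebra sg) phi (Hc : is_cong A phi) :
  in_S (quot A phi) -> forall a b, phi (tA t a b) (tA t b a).
Proof.
move=> HS a b.
have Hreg : regular (t, tsub t (Var 1) (Var 0)).
  move=> i /=; rewrite (occurs_tsub Ht) /=; case: Ht => H1 H2; split.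
  - move/H1; lia.
  - move=> Hi; apply: H2; lia.
have := HS _ Hreg (env2 (qclass phi a) (qclass phi b)).
rewrite /= eval_tsub /=.
rewrite -[eval _ t]/(@tA _ (quot A phi) t (qclass phi a) (qclass phi b)) !tA_quot //.
apply: qclass_inv; by case: Hc.
Qed.

Lemma sim_least sg Sig t (A : algebra sg) (H : Hyp Sig t A) phi :
  is_cong A phi -> in_S (quot A phi) -> forall x y, sim t x y -> phi x y.
Proof.
have Ht : in_T 2 t by case: H.
move=> Hc HS x y [E1 E2]; rewrite -E1 -{2}E2; exact: comm_S.
Qed.

Lemma sim_replica sg Sig t (A : algebra sg) (H : Hyp Sig t A) : is_sl_replica A (sim t).
Proof. split; [exact: sim_cong H | exact: sim_S H | exact: sim_least H]. Qed.

Theorem proposition5p2 (sg : signature) (Hpl : plural sg)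
  (Sig : ident sg -> Prop) (t : term sg nat) (Ht : in_T 2 t)
  (HVt : forall A : algebra sg, in_var Sig A -> sat A (t, Var 0))
  (X : Type) (B : algebra sg) (iota : X -> B)
  (HB : is_free (in_var (prolong (IdV Sig))) B iota)
  (delta : B -> B -> Prop) (Hdelta : is_cong B delta)
  (rhoB : B -> B -> Prop) (Hrho : is_sl_replica B rhoB) :
  in_VS Sig (quot B delta) /\
  is_sl_replica (quot B delta) (cong_quot B delta (cong_join B delta rhoB)) /\
  classes_in Sig (quot B delta) (cong_quot B delta (cong_join B delta rhoB)).
Proof.
have HBH : Hyp Sig t B by split => //; case: HB.
have HDH : Hyp Sig t (quot B delta).
  split => // s Hs; apply: quot_sat => //; case: HB => HB _; exact: HB.
have [Hdr Hds Hdt Hdo] := Hdelta.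
have [HDc HDS HDl] := sim_replica HDH.
have [HBc HBS HBl] := sim_replica HBH.
have [Hrc HrS Hrl] := Hrho.
have E : cong_quot B delta (cong_join B delta rhoB) = sim t.
  apply: functional_extensionality => c; apply: functional_extensionality => d.
  apply: propositional_extensionality; split.
  - case=> a [b [-> -> Hab]].
    pose R := fun x y : B => @sim _ (quot B delta) t (qclass delta x) (qclass delta y).
    apply: (Hab R).
    + have [Rr Rs Rt Ro] := HDc.
      split.
      * move=> x; exact: Rr.
      * move=> x y; exact: Rs.
      * move=> x y z; exact: Rt.
      * move=> o f g Hfg; rewrite /R !qclass_hom //; exact: Ro.
    + move=> x y Hxy; rewrite /R (qclass_eq Hds Hdt Hxy); exact: sim_refl HDH _.
    + move=> x y /(Hrl _ HBc HBS) [E1 E2]; rewrite /R; split; by rewrite tA_quot // ?E1 ?E2.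
  - rewrite -(qclass_qrepr c) -(qclass_qrepr d); move: (qrepr c) (qrepr d) => a b.
    move=> [E1 E2]; exists a, b; split => //.
    move: E1 E2; rewrite !tA_quot //.
    move=> /(qclass_inv Hdr) E1 /(qclass_inv Hdr) E2.
    move=> phi [Qr Qs Qt Qo] Hd Hr.
    apply: (Qt _ _ _ (Qs _ _ (Hd _ _ E1))).
    apply: (Qt _ _ _ _ (Hd _ _ E2)).
    apply: Hr; exact: (comm_S Ht Hrc HrS).
rewrite E; split; last split.
- exists (sim t); split => //; exact: sim_classes HDH.
- exact: sim_replica HDH.
- exact: sim_classes HDH.
Qed.
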